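(* Let $k\in\{-1,0,1\}$, $\beta>0$, let $\delta_k>0$ be the positive real solution of $\delta^3+k\delta-\frac{3\beta}{2}=0$, and let $R_b>0$ (with $R_b<1$ if $k=1$). Define \[ R_{\mathrm{AH}}=\frac{1}{\sqrt{\delta_k^2+k}},\quad C_k=\frac{1}{\sqrt{1-kR_b^2}+\delta_kR_b},\quad x_\Sigma=\frac{R_b\delta_k}{C_k},\quad \lambda_1=\frac{\beta R_b^3}{C_k},\quad \lambda_2=\frac{\beta C_k^2}{2\delta_k^3}, \] and, for $u>0$ and $r\ge x_\Sigma u$, $B(u,r)=1-\lambda_1\frac{u}{r}-\lambda_2\frac{r^2}{u^2}$; the apparent horizons of the exterior metric $g_{\mathrm{ext}}=-B(u,r)\,du^2-2\,du\,dr+r^2d\Omega^2$ on $r>x_\Sigma u$ are the hypersurfaces where $B=0$. Then: (1) If $R_b>R_{\mathrm{AH}}$, then $B(u,r)<0$ for all $u>0$, $r>x_\Sigma u$; in particular there is no apparent horizon in the exterior region. (2) If $R_b=R_{\mathrm{AH}}$, then $B(u,x_\Sigma u)=0$ for all $u>0$ (the exterior apparent horizon coincides with the matching surface $r=x_\Sigma u$), and $B(u,r)<0$ for all $r>x_\Sigma u$. (3) If $R_b<R_{\mathrm{AH}}$, then there exists $x_{\mathrm{AH}}>x_\Sigma$ such that the exterior metric has an apparent horizon at $r=x_{\mathrm{AH}}u$; moreover $B(u,r)>0$ for $x_\Sigma u<r<x_{\mathrm{AH}}u$ and $B(u,r)<0$ for $r>x_{\mathrm{AH}}u$.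
   Context: This is the exterior of the self-similar stellar model: the interior is $-dt^2+a(t)^2\big(\frac{dR^2}{1-kR^2}+R^2d\Omega^2\big)$ with $a(t)=\delta_k t$, the matching surface is $R=R_b$ in the interior and $r=x_\Sigma u$ in the exterior (with $u=C_kt$), and $R_{\mathrm{AH}}$ is the comoving radius of the interior apparent horizon. $d\Omega^2=d\theta^2+\sin^2\theta\,d\psi^2$. *)

(* Defs.v *)
From Stdlib Require Import Reals.
Open Scope R_scope.

Definition R_AH (k delta : R) : R := 1 / sqrt (delta ^ 2 + k).
Definition C_k (k delta Rb : R) : R := 1 / (sqrt (1 - k * Rb ^ 2) + delta * Rb).
Definition x_Sigma (k delta Rb : R) : R := Rb * delta / C_k k delta Rb.
Definition lambda1 (k beta delta Rb : R) : R := beta * Rb ^ 3 / C_k k delta Rb.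
Definition lambda2 (k beta delta Rb : R) : R :=
  beta * (C_k k delta Rb) ^ 2 / (2 * delta ^ 3).
Definition Bfun (k beta delta Rb u r : R) : R :=
  1 - lambda1 k beta delta Rb * (u / r) - lambda2 k beta delta Rb * (r ^ 2 / u ^ 2).

(* Main.v *)
Require Import Defs.
From Stdlib Require Import Reals Lra Psatz.
Open Scope R_scope.

Definition bb (L1 L2 x : R) := 1 - L1 / x - L2 * x ^ 2.

Lemma bb_dec (L1 L2 xs x y : R) : 0 < L2 -> 0 < xs -> L1 = 2 * L2 * xs ^ 3 ->
  xs <= x -> x < y -> bb L1 L2 y < bb L1 L2 x.
Proof.
  intros HL2 Hxs HL1 Hx Hy.
  assert (E : bb L1 L2 x - bb L1 L2 y = (y - x) * (L2 * (x * y * (x + y)) - L1) / (x * y)).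
  { unfold bb; field; lra. }
  assert (Hxy : x * y > xs * xs) by nra.
  assert (H3 : x * y * (x + y) > 2 * xs ^ 3) by nra.
  assert (0 < (y - x) * (L2 * (x * y * (x + y)) - L1) / (x * y)).
  { apply Rdiv_lt_0_compat; [|nra]. apply Rmult_lt_0_compat; nra. }
  lra.
Qed.

Lemma B_bb k beta delta Rb u r : 0 < u -> 0 < r ->
  Bfun k beta delta Rb u r = bb (lambda1 k beta delta Rb) (lambda2 k beta delta Rb) (r / u).
Proof. intros; unfold Bfun, bb; field; lra. Qed.

Theorem mainTheorem4 (k beta delta Rb : R)
  (hk : k = -1 \/ k = 0 \/ k = 1)
  (hbeta : 0 < beta)
  (hdelta : 0 < delta)
  (hcubic : delta ^ 3 + k * delta - 3 * beta / 2 = 0)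
  (hRb : 0 < Rb)
  (hRb1 : k = 1 -> Rb < 1) :
  (R_AH k delta < Rb ->
     forall u r, 0 < u -> x_Sigma k delta Rb * u < r -> Bfun k beta delta Rb u r < 0)
  /\
  (Rb = R_AH k delta ->
     (forall u, 0 < u -> Bfun k beta delta Rb u (x_Sigma k delta Rb * u) = 0)
     /\ (forall u r, 0 < u -> x_Sigma k delta Rb * u < r -> Bfun k beta delta Rb u r < 0))
  /\
  (Rb < R_AH k delta ->
     exists xAH, x_Sigma k delta Rb < xAH
       /\ (forall u, 0 < u -> Bfun k beta delta Rb u (xAH * u) = 0)
       /\ (forall u r, 0 < u -> x_Sigma k delta Rb * u < r < xAH * u ->
             0 < Bfun k beta delta Rb u r)
       /\ (forall u r, 0 < u -> xAH * u < r -> Bfun k beta delta Rb u r < 0)).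
Proof.
  set (s := sqrt (1 - k * Rb ^ 2)).
  assert (Hs : 0 <= s) by apply sqrt_pos.
  set (D := s + delta * Rb).
  assert (HD : 0 < D) by (unfold D; nra).
  assert (EC : C_k k delta Rb = 1 / D) by reflexivity.
  set (xs := x_Sigma k delta Rb).
  set (L1 := lambda1 k beta delta Rb).
  set (L2 := lambda2 k beta delta Rb).
  assert (Exs : xs = Rb * delta * D) by (unfold xs, x_Sigma; rewrite EC; field; lra).
  assert (EL1 : L1 = beta * Rb ^ 3 * D) by (unfold L1, lambda1; rewrite EC; field; lra).
  assert (EL2 : L2 = beta / (2 * delta ^ 3 * D ^ 2)) by (unfold L2, lambda2; rewrite EC; field; lra).
  assert (Hxs : 0 < xs) by (rewrite Exs; apply Rmult_lt_0_compat; nra).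
  assert (HL2 : 0 < L2).
  { rewrite EL2. apply Rdiv_lt_0_compat; [lra|]. apply Rmult_lt_0_compat; [|nra].
    assert (0 < delta ^ 3) by (apply pow_lt; lra). lra. }
  assert (HL1 : L1 = 2 * L2 * xs ^ 3).
  { rewrite EL1, EL2, Exs. field. split; lra. }
  set (q := delta ^ 2 + k).
  assert (Hq : 0 < q).
  { unfold q. assert (delta * (delta ^ 2 + k) > 0) by nra. nra. }
  assert (Hbxs : bb L1 L2 xs = 1 - Rb ^ 2 * q).
  { unfold bb, q. rewrite HL1, EL2, Exs.
    assert (Eb : beta = 2 * (delta ^ 3 + k * delta) / 3) by lra.
    rewrite Eb. field. split; lra. }
  assert (HSq : sqrt q * sqrt q = q) by (apply sqrt_sqrt; lra).
  assert (HS : 0 < sqrt q) by (apply sqrt_lt_R0; lra).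
  assert (ERAH : R_AH k delta = 1 / sqrt q) by reflexivity.
  assert (Bx : forall u r, 0 < u -> xs * u < r -> xs < r / u /\ 0 < r).
  { intros u r Hu Hr. split. apply Rmult_lt_reg_r with u; [lra|].
    unfold Rdiv; rewrite Rmult_assoc, Rinv_l; lra. nra. }
  split; [|split].
  - intros HH u r Hu Hr. destruct (Bx u r Hu Hr) as [H1 H2].
    rewrite B_bb by lra. fold L1 L2.
    assert (Hm : bb L1 L2 (r/u) < bb L1 L2 xs) by (apply bb_dec with xs; lra).
    rewrite ERAH in HH.
    assert (1 < Rb * sqrt q).
    { apply Rmult_lt_reg_r with (/ sqrt q). apply Rinv_0_lt_compat; lra.
      rewrite Rmult_assoc, Rinv_r; [|lra]. unfold Rdiv in HH. lra. }
    nra.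
  - intros HH. split.
   + intros u Hu. rewrite B_bb by nra. fold L1 L2.
    replace (xs * u / u) with xs by (field; lra).
    rewrite Hbxs, HH, ERAH.
    replace ((1/sqrt q)^2 * q) with ((1/sqrt q)^2*(sqrt q * sqrt q)) by (rewrite HSq; reflexivity). field. lra.
   + intros u r Hu Hr. destruct (Bx u r Hu Hr) as [H1 H2].
    rewrite B_bb by lra. fold L1 L2.
    assert (Hm : bb L1 L2 (r/u) < bb L1 L2 xs) by (apply bb_dec with xs; lra).
    assert (bb L1 L2 xs = 0).
    { rewrite Hbxs, HH, ERAH.
      replace ((1/sqrt q)^2 * q) with ((1/sqrt q)^2*(sqrt q * sqrt q)) by (rewrite HSq; reflexivity). field. lra. }
    lra.
  - intros HH.
    assert (Hpos : 0 < bb L1 L2 xs).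
    { rewrite Hbxs. rewrite ERAH in HH.
      assert (Rb * sqrt q < 1).
      { apply Rmult_lt_reg_r with (/ sqrt q). apply Rinv_0_lt_compat; lra.
        rewrite Rmult_assoc, Rinv_r; [|lra]. unfold Rdiv in HH. lra. }
      assert (0 < Rb*sqrt q) by (apply Rmult_lt_0_compat; lra).
      assert (Rb*sqrt q * (Rb * sqrt q) < 1) by nra.
      replace (Rb ^ 2 * q) with (Rb*sqrt q * (Rb * sqrt q)) by (transitivity (Rb^2*(sqrt q*sqrt q)); [ring | rewrite HSq; reflexivity]). lra. }
    set (x1 := xs + 1 + / L2).
    assert (HiL : 0 < / L2) by (apply Rinv_0_lt_compat; lra).
    assert (Hx1 : xs < x1) by (unfold x1; lra).
    assert (Hneg : bb L1 L2 x1 < 0).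
    { unfold bb. assert (L2 * x1 > 1).
      { unfold x1. replace (L2 * (xs + 1 + / L2)) with (L2 * (xs + 1) + 1) by (field; lra). nra. }
      assert (HL1p : 0 < L1) by (rewrite HL1; assert (0 < xs ^ 3) by (apply pow_lt; lra); nra).
      assert (L1 / x1 > 0) by (apply Rdiv_lt_0_compat; lra).
      assert (x1 > 1) by (unfold x1; lra).
      assert (L2 * x1 ^ 2 > 1) by nra. lra. }
    assert (Hg : forall x, 0 < x -> L2 * x ^ 3 + L1 - x = - x * bb L1 L2 x).
    { intros x Hx. unfold bb. field. lra. }
    destruct (IVT (fun x => L2 * x ^ 3 + L1 - x) xs x1) as [z [[Hz1 Hz2] Hz]].
    + reg.
    + exact Hx1.
    + rewrite Hg by lra. nra.
    + rewrite Hg by lra. nra.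
    + assert (Hzne : z <> xs).
      { intro E. rewrite E, Hg in Hz by lra. nra. }
      assert (Hz0 : bb L1 L2 z = 0).
      { rewrite Hg in Hz by lra. apply Rmult_integral in Hz. destruct Hz; lra. }
      exists z. repeat split.
      * lra.
      * intros u Hu. rewrite B_bb by nra. fold L1 L2.
        replace (z * u / u) with z by (field; lra). exact Hz0.
      * intros u r Hu [Hr1 Hr2]. destruct (Bx u r Hu Hr1) as [H1 H2].
        rewrite B_bb by lra. fold L1 L2.
        assert (r / u < z).
        { apply Rmult_lt_reg_r with u; [lra|].
          unfold Rdiv; rewrite Rmult_assoc, Rinv_l; lra. }
        assert (bb L1 L2 z < bb L1 L2 (r/u)) by (apply bb_dec with xs; lra).
        lra.
      * intros u r Hu Hr.
        assert (Hr' : xs * u < r) by nra.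
        destruct (Bx u r Hu Hr') as [H1 H2].
        rewrite B_bb by lra. fold L1 L2.
        assert (z < r / u).
        { apply Rmult_lt_reg_r with u; [lra|].
          unfold Rdiv; rewrite Rmult_assoc, Rinv_l; lra. }
        assert (bb L1 L2 (r/u) < bb L1 L2 z) by (apply bb_dec with xs; lra).
        lra.
Qed.
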